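(* Every ideal of a nilpotent-free Lie algebra is nilpotent-free (as a Lie algebra in its own right).
   Context: All algebras are finite-dimensional over an infinite field $K$. An element $x$ of a Lie algebra $L$ is nilpotent if $\operatorname{ad}x$ (acting on $L$) is a nilpotent linear map. $L$ is called nilpotent-free if every nilpotent element of $L$ lies in the center of $L$. *)

(* Defs.v *)
From HB Require Import structures.
From mathcomp Require Import all_boot all_order all_algebra.
Set Implicit Arguments. Unset Strict Implicit. Unset Printing Implicit Defensive.
Import GRing.Theory.
Local Open Scope ring_scope.

Definition infinite_field (K : fieldType) : Prop :=
  forall s : seq K, exists x : K, x \notin s.

Definition is_lie_bracket (K : fieldType) (L : vectType K) (br : L -> L -> L) : Prop :=
  [/\ (forall (a : K) (x y z : L), br (a *: x + y) z = a *: br x z + br y z),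
      (forall (a : K) (x y z : L), br z (a *: x + y) = a *: br z x + br z y),
      (forall x : L, br x x = 0) &
      (forall x y z : L, br x (br y z) + br y (br z x) + br z (br x y) = 0)].

Definition lie_ideal (K : fieldType) (L : vectType K) (br : L -> L -> L)
  (I : {vspace L}) : Prop :=
  forall x y : L, y \in I -> br x y \in I.

Definition nilpotent_free_on (K : fieldType) (L : vectType K) (br : L -> L -> L)
  (S : {vspace L}) : Prop :=
  forall x : L, x \in S ->
    (exists n : nat, forall y : L, y \in S -> iter n (br x) y = 0) ->
    forall y : L, y \in S -> br x y = 0.

Definition nilpotent_free (K : fieldType) (L : vectType K) (br : L -> L -> L) : Prop :=
  nilpotent_free_on br fullv.

(* Main.v *)
Require Import Defs.
From mathcomp Require Import all_boot all_order all_algebra.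
Import GRing.Theory.
Local Open Scope ring_scope.

Theorem lemma8 (K : fieldType) (L : vectType K) (br : L -> L -> L)
  (I : {vspace L}) :
  infinite_field K ->
  is_lie_bracket br ->
  nilpotent_free br ->
  lie_ideal br I ->
  nilpotent_free_on br I.
Proof.
move=> _ [linl linr alt _] nf id x xI [n hn] y yI.
have addl : forall u v z, br (u + v) z = br u z + br v z.
  by move=> u v z; rewrite -[u in LHS]scale1r linl scale1r.
have addr : forall u v z, br z (u + v) = br z u + br z v.
  by move=> u v z; rewrite -[u in LHS]scale1r linr scale1r.
have anti : forall u v, br u v = - br v u.
  move=> u v; apply/eqP; rewrite -addr_eq0; apply/eqP.
  have := alt (u + v); rewrite addl !addr !alt add0r addr0 => H.
  by rewrite H.
have inI : forall z, br x z \in I.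
  by move=> z; rewrite anti rpredN; apply: id.
apply: (nf x (memvf x) _ y (memvf y)).
exists n.+1 => z _; rewrite iterSr; exact: hn.
Qed.
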